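(* Let $(A,\cdot,\circ)$ be a skew brace and let $B$, $C$ be sub-skew braces of $A$. (a) If $A = B\cdot C$ and $B$ is a left ideal in $A$ or in $A^{\mathrm{op}}$, then $A = B\circ C$. (b) If $A = B\circ C$ and $B$ is a right ideal in $A$ or in $A^{\mathrm{op}}$, then $A = B\cdot C$.
   Context: A skew brace is a set $A$ with two group operations $\cdot$ (often written by juxtaposition) and $\circ$ such that $a\circ(bc) = (a\circ b)\,a^{-1}\,(a\circ c)$ for all $a,b,c\in A$. $a^{-1}$ denotes the inverse in $(A,\cdot)$. Define $a*b = a^{-1}(a\circ b)b^{-1}$, $\lambda_a(b)=a^{-1}(a\circ b)$, $\lambda^{\mathrm{op}}_a(b)=(a\circ b)a^{-1}$. A sub-skew brace is a subset that is a subgroup of both $(A,\cdot)$ and $(A,\circ)$. $A=B\cdot C$ means every element is $bc$ with $b\in B,c\in C$; $A=B\circ C$ similarly. A subgroup $I$ of $(A,\cdot)$ is a left ideal in $A$ iff $\lambda_a(x)\in I$ for all $a\in A,x\in I$, and a right ideal in $A$ iff $\lambda_x(a)a^{-1}\in I$ for all $x\in I,a\in A$. The opposite skew brace $A^{\mathrm{op}}$ is $A$ with $a\cdot^{\mathrm{op}}b=ba$ and the same $\circ$; $I$ is a left ideal in $A^{\mathrm{op}}$ iff $\lambda^{\mathrm{op}}_a(x)\in I$ for all $a\in A,x\in I$, and a right ideal in $A^{\mathrm{op}}$ iff $a^{-1}\lambda^{\mathrm{op}}_x(a)\in I$ for all $x\in I,a\in A$. *)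

(* Defs.v *)
Set Implicit Arguments.

Record group_ax (T : Type) (op : T -> T -> T) (inv : T -> T) (e : T) : Prop := {
  g_assoc : forall a b c, op a (op b c) = op (op a b) c;
  g_idl : forall a, op e a = a;
  g_idr : forall a, op a e = a;
  g_invl : forall a, op (inv a) a = e;
  g_invr : forall a, op a (inv a) = e
}.

Record SkewBrace := {
  sb_car :> Type;
  sb_mul : sb_car -> sb_car -> sb_car;
  sb_inv : sb_car -> sb_car;
  sb_one : sb_car;
  sb_circ : sb_car -> sb_car -> sb_car;
  sb_cinv : sb_car -> sb_car;
  sb_cone : sb_car;
  sb_mul_group : group_ax sb_mul sb_inv sb_one;
  sb_circ_group : group_ax sb_circ sb_cinv sb_cone;
  sb_compat : forall a b c,
    sb_circ a (sb_mul b c) = sb_mul (sb_mul (sb_circ a b) (sb_inv a)) (sb_circ a c)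
}.

Section SB.
Variable A : SkewBrace.
Local Notation mul := (sb_mul A).
Local Notation inv := (sb_inv A).
Local Notation circ := (sb_circ A).

Definition lam (a b : A) : A := mul (inv a) (circ a b).
Definition lam_op (a b : A) : A := mul (circ a b) (inv a).

Definition mul_subgroup (S : A -> Prop) : Prop :=
  S (sb_one A) /\ (forall x y, S x -> S y -> S (mul x y)) /\ (forall x, S x -> S (inv x)).
Definition circ_subgroup (S : A -> Prop) : Prop :=
  S (sb_cone A) /\ (forall x y, S x -> S y -> S (circ x y))
  /\ (forall x, S x -> S (sb_cinv A x)).

Definition sub_skew_brace (S : A -> Prop) : Prop := mul_subgroup S /\ circ_subgroup S.

Definition mul_factorizes (B C : A -> Prop) : Prop :=
  forall a : A, exists b c, B b /\ C c /\ a = mul b c.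
Definition circ_factorizes (B C : A -> Prop) : Prop :=
  forall a : A, exists b c, B b /\ C c /\ a = circ b c.

Definition left_ideal (I : A -> Prop) : Prop :=
  mul_subgroup I /\ forall a x, I x -> I (lam a x).
Definition right_ideal (I : A -> Prop) : Prop :=
  mul_subgroup I /\ forall x a, I x -> I (mul (lam x a) (inv a)).
(* left/right ideals in A^op (A with a .op b = b a and the same o) *)
Definition left_ideal_op (I : A -> Prop) : Prop :=
  mul_subgroup I /\ forall a x, I x -> I (lam_op a x).
Definition right_ideal_op (I : A -> Prop) : Prop :=
  mul_subgroup I /\ forall x a, I x -> I (mul (inv a) (lam_op x a)).
End SB.

Arguments lam {A}. Arguments lam_op {A}.
Arguments mul_subgroup {A}. Arguments circ_subgroup {A}.
Arguments sub_skew_brace {A}. Arguments mul_factorizes {A}. Arguments circ_factorizes {A}.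
Arguments left_ideal {A}. Arguments right_ideal {A}.
Arguments left_ideal_op {A}. Arguments right_ideal_op {A}.

(* Main.v *)
Require Import Defs.
Set Implicit Arguments.

Section G.
Variables (T : Type) (op : T -> T -> T) (inv : T -> T) (e : T).
Hypothesis G : group_ax op inv e.
Lemma g_cancl x y z : op x y = op x z -> y = z.
Proof.
  intro H. rewrite <- (g_idl G y), <- (g_idl G z), <- (g_invl G x), <- !(g_assoc G), H. reflexivity.
Qed.
Lemma g_uniqinv x y : op x y = e -> y = inv x.
Proof. intro H. apply (@g_cancl x). rewrite H, (g_invr G). reflexivity. Qed.
Lemma g_invinv x : inv (inv x) = x.
Proof. symmetry. apply g_uniqinv. apply (g_invl G). Qed.
Lemma g_invop x y : inv (op x y) = op (inv y) (inv x).
Proof. symmetry. apply g_uniqinv.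
  rewrite (g_assoc G), <- (g_assoc G x), (g_invr G), (g_idr G), (g_invr G). reflexivity. Qed.
Lemma g_inve : inv e = e.
Proof. symmetry. apply g_uniqinv. apply (g_idl G). Qed.
Lemma g_idem x : op x x = x -> x = e.
Proof. intro H. apply (@g_cancl x). rewrite H, (g_idr G). reflexivity. Qed.
End G.

Section S.
Variable A : SkewBrace.
Notation mul := (sb_mul A).
Notation inv := (sb_inv A).
Notation circ := (sb_circ A).
Notation cinv := (sb_cinv A).
Let MG := sb_mul_group A.
Let CG := sb_circ_group A.

Lemma circ_one a : circ a (sb_one A) = a.
Proof.
  assert (H := sb_compat A a (sb_one A) (sb_one A)).
  rewrite (g_idl MG) in H.
  set (u := circ a (sb_one A)) in *.
  assert (H2 : mul (inv a) u = sb_one A).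
  { apply (g_idem MG). rewrite <- (g_assoc MG). rewrite (g_assoc MG u). rewrite <- H.
    reflexivity. }
  rewrite (@g_uniqinv _ _ _ _ MG _ _ H2). apply (g_invinv MG).
Qed.

Lemma one_eq : sb_one A = sb_cone A.
Proof. rewrite <- (circ_one (sb_cone A)). symmetry; apply (g_idl CG). Qed.

Lemma lam_comp x y z : lam x (lam y z) = lam (circ x y) z.
Proof.
  unfold lam. assert (H := sb_compat A x y (mul (inv y) (circ y z))).
  rewrite (g_assoc MG), (g_invr MG), (g_idl MG), (g_assoc CG) in H.
  rewrite H, <- !(g_assoc MG), (g_assoc MG (inv _)), (g_invl MG), (g_idl MG). reflexivity.
Qed.

Lemma lam_op_comp x y z : lam_op x (lam_op y z) = lam_op (circ x y) z.
Proof.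
  unfold lam_op. assert (H := sb_compat A x (mul (circ y z) (inv y)) y).
  rewrite <- (g_assoc MG), (g_invl MG), (g_idr MG), (g_assoc CG) in H.
  rewrite H, <- (g_assoc MG), (g_invr MG), (g_idr MG). reflexivity.
Qed.

Lemma lam_one z : lam (sb_cone A) z = z.
Proof. unfold lam. rewrite <- one_eq, (g_inve MG), (g_idl MG), one_eq, (g_idl CG). reflexivity. Qed.
Lemma lam_op_one z : lam_op (sb_cone A) z = z.
Proof. unfold lam_op. rewrite <- one_eq, (g_inve MG), (g_idr MG), one_eq, (g_idl CG). reflexivity. Qed.

Lemma lam_inv x z : lam x (lam (cinv x) z) = z.
Proof. rewrite lam_comp, (g_invr CG). apply lam_one. Qed.
Lemma lam_op_inv x z : lam_op x (lam_op (cinv x) z) = z.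
Proof. rewrite lam_op_comp, (g_invr CG). apply lam_op_one. Qed.

Lemma circ_swap (B C : A -> Prop) : circ_subgroup B -> circ_subgroup C ->
  (forall a, exists c b, B b /\ C c /\ a = circ c b) -> circ_factorizes B C.
Proof.
  intros [_ [_ HB]] [_ [_ HC]] H a. destruct (H (cinv a)) as [c [b [Hb [Hc E]]]].
  exists (cinv b), (cinv c). split; [auto|split; [auto|]].
  rewrite <- (g_invinv CG a), E. apply (g_invop CG).
Qed.

Lemma mul_swap (B C : A -> Prop) : mul_subgroup B -> mul_subgroup C ->
  (forall a, exists c b, B b /\ C c /\ a = mul c b) -> mul_factorizes B C.
Proof.
  intros [_ [_ HB]] [_ [_ HC]] H a. destruct (H (inv a)) as [c [b [Hb [Hc E]]]].
  exists (inv b), (inv c). split; [auto|split; [auto|]].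
  rewrite <- (g_invinv MG a), E. apply (g_invop MG).
Qed.
End S.

Theorem lemma2p7 (A : SkewBrace) (B C : A -> Prop) :
  sub_skew_brace B -> sub_skew_brace C ->
  (mul_factorizes B C -> left_ideal B \/ left_ideal_op B -> circ_factorizes B C) /\
  (circ_factorizes B C -> right_ideal B \/ right_ideal_op B -> mul_factorizes B C).
Proof.
  intros [BM BC] [CM CC].
  assert (MG := sb_mul_group A). assert (CG := sb_circ_group A).
  split.
  - intros HF HI. apply circ_swap; auto.
    destruct HI as [[[_ [_ Binv]] HL] | [[_ [_ Binv]] HL]].
    + intro a. destruct (HF (sb_inv A a)) as [b [c [Hb [Hc E]]]].
      exists (sb_inv A c), (lam (sb_cinv A (sb_inv A c)) (sb_inv A b)).
      split; [auto|]. split; [destruct CM as [_ [_ ?]]; auto|].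
      change (sb_circ A ?x (lam ?y ?z)) with (sb_circ A x (lam y z)).
      assert (Eq : forall x y, sb_circ A x y = sb_mul A x (lam x y)).
      { intros x y. unfold lam. rewrite (g_assoc MG), (g_invr MG), (g_idl MG). reflexivity. }
      rewrite Eq, lam_inv, <- (g_invop MG), <- E, (g_invinv MG). reflexivity.
    + intro a. destruct (HF a) as [b [c [Hb [Hc E]]]].
      exists c, (lam_op (sb_cinv A c) b). split; [auto|]. split; [auto|].
      assert (Eq : forall x y, sb_circ A x y = sb_mul A (lam_op x y) x).
      { intros x y. unfold lam_op. rewrite <- (g_assoc MG), (g_invl MG), (g_idr MG). reflexivity. }
      rewrite Eq, lam_op_inv, E. reflexivity.
  - intros HF HI. destruct HI as [[[_ [Bmul _]] HR] | [[_ [Bmul _]] HR]].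
    + intro a. destruct (HF a) as [b [c [Hb [Hc E]]]].
      exists (sb_mul A b (sb_mul A (lam b c) (sb_inv A c))), c.
      split; [auto|]. split; [auto|].
      rewrite E, <- !(g_assoc MG), (g_invl MG), (g_idr MG). unfold lam.
      rewrite (g_assoc MG), (g_invr MG), (g_idl MG). reflexivity.
    + apply mul_swap; auto. intro a. destruct (HF a) as [b [c [Hb [Hc E]]]].
      exists c, (sb_mul A (sb_mul A (sb_inv A c) (lam_op b c)) b).
      split; [auto|]. split; [auto|].
      rewrite E, !(g_assoc MG), (g_invr MG), (g_idl MG). unfold lam_op.
      rewrite <- (g_assoc MG), (g_invl MG), (g_idr MG). reflexivity.
Qed.
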